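(* Let $I$ be an ideal of a multiplicative Lie algebra $G$. Then $\dfrac{G}{I}\otimes\dfrac{G}{I}\cong\dfrac{G\otimes G}{(I\otimes G)(G\otimes I)}$.
   Context: A multiplicative Lie algebra is a group $(G,\cdot)$ with a binary operation $\star$ such that for all $x,y,z\in G$: $x\star x=1$; $x\star(yz)=(x\star y)\,{}^y(x\star z)$; $(xy)\star z={}^x(y\star z)(x\star z)$; $((x\star y)\star{}^yz)((y\star z)\star{}^zx)((z\star x)\star{}^xy)=1$; ${}^z(x\star y)={}^zx\star{}^zy$, where ${}^xy=xyx^{-1}$. An ideal is a normal subgroup $I$ with $x\star y\in I$ for all $x\in G,y\in I$. The tensor square $G\otimes G$ is the multiplicative Lie algebra generated by symbols $x\otimes y$ ($x,y\in G$) subject to, for all $x,x',y,y'\in G$: $x\otimes(yy')=(x\otimes y)({}^yx\otimes{}^yy')$; $(xx')\otimes y=({}^xx'\otimes{}^xy)(x\otimes y)$; $((x\star x')\otimes{}^{x'}y)({}^yx\otimes(x'\star y))^{-1}({}^xx'\otimes(x\star y)^{-1})^{-1}=1$; $({}^{y'}x\otimes(y\star y'))((y\star x)^{-1}\otimes{}^yy')^{-1}((y'\star x)\otimes{}^xy)^{-1}=1$; and $(x\otimes y)\star(x'\otimes y')=(y\star x)^{-1}\otimes(x'\star y')$. $I\otimes G$ (resp. $G\otimes I$) is the subgroup of $G\otimes G$ generated by all $a\otimes b$ with $a\in I,b\in G$ (resp. $a\in G,b\in I$). *)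

(* Defs.v *)
Record mla := MLA {
  carrier :> Type;
  mul : carrier -> carrier -> carrier;
  one : carrier;
  inv : carrier -> carrier;
  star : carrier -> carrier -> carrier;
  mulA : forall x y z, mul x (mul y z) = mul (mul x y) z;
  mul1x : forall x, mul one x = x;
  mulx1 : forall x, mul x one = x;
  mulVx : forall x, mul (inv x) x = one;
  mulxV : forall x, mul x (inv x) = one;
  (* multiplicative Lie algebra axioms, with  ^x y = x y x^-1 *)
  star_xx : forall x, star x x = one;
  star_mulr : forall x y z,
    star x (mul y z) = mul (star x y) (mul y (mul (star x z) (inv y)));
  star_mull : forall x y z,
    star (mul x y) z = mul (mul x (mul (star y z) (inv x))) (star x z);
  star_jacobi : forall x y z,
    mul (mul (star (star x y) (mul y (mul z (inv y))))
             (star (star y z) (mul z (mul x (inv z)))))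
        (star (star z x) (mul x (mul y (inv x)))) = one;
  star_conj : forall x y z,
    mul z (mul (star x y) (inv z)) =
    star (mul z (mul x (inv z))) (mul z (mul y (inv z)))
}.

Arguments mul {m}.
Arguments one {m}.
Arguments inv {m}.
Arguments star {m}.

Definition conj {G : mla} (x y : G) : G := mul x (mul y (inv x)).

Definition is_ideal (G : mla) (I : G -> Prop) : Prop :=
  I one /\
  (forall x y, I x -> I y -> I (mul x y)) /\
  (forall x, I x -> I (inv x)) /\
  (forall g x, I x -> I (conj g x)) /\
  (forall x y, I y -> I (star x y)).

Definition mla_hom {G H : mla} (f : G -> H) : Prop :=
  (forall x y, f (mul x y) = mul (f x) (f y)) /\
  (forall x y, f (star x y) = star (f x) (f y)).

Definition mla_iso {G H : mla} (f : G -> H) : Prop :=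
  mla_hom f /\ (forall x y, f x = f y -> x = y) /\ (forall z, exists x, f x = z).

Definition tensor_rel (G L : mla) (f : G -> G -> L) : Prop :=
  (forall x y y' : G,
     f x (mul y y') = mul (f x y) (f (conj y x) (conj y y'))) /\
  (forall x x' y : G,
     f (mul x x') y = mul (f (conj x x') (conj x y)) (f x y)) /\
  (forall x x' y : G,
     mul (mul (f (star x x') (conj x' y))
              (inv (f (conj y x) (star x' y))))
         (inv (f (conj x x') (inv (star x y)))) = one) /\
  (forall x y y' : G,
     mul (mul (f (conj y' x) (star y y'))
              (inv (f (inv (star y x)) (conj y y'))))
         (inv (f (star y' x) (conj x y))) = one) /\
  (forall x y x' y' : G,
     star (f x y) (f x' y') = f (inv (star y x)) (star x' y')).

(* (T, t) is the tensor square G (x) G: the multiplicative Lie algebra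
   generated by the symbols t x y = x (x) y subject to the relations, i.e.
   it satisfies the relations and is universal for them. *)
Definition is_tensor_square (G T : mla) (t : G -> G -> T) : Prop :=
  tensor_rel G T t /\
  forall (L : mla) (f : G -> G -> L), tensor_rel G L f ->
    (exists h : T -> L, mla_hom h /\ forall x y, h (t x y) = f x y) /\
    (forall h1 h2 : T -> L, mla_hom h1 -> mla_hom h2 ->
       (forall x y, h1 (t x y) = f x y) -> (forall x y, h2 (t x y) = f x y) ->
       forall z, h1 z = h2 z).

Inductive gen_subgroup {T : mla} (S : T -> Prop) : T -> Prop :=
| gs_base : forall x, S x -> gen_subgroup S x
| gs_one : gen_subgroup S one
| gs_mul : forall x y, gen_subgroup S x -> gen_subgroup S y -> gen_subgroup S (mul x y)
| gs_inv : forall x, gen_subgroup S x -> gen_subgroup S (inv x).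

Definition left_tensor {G T : mla} (t : G -> G -> T) (I : G -> Prop) : T -> Prop :=
  gen_subgroup (fun z => exists a b, I a /\ z = t a b).
Definition right_tensor {G T : mla} (t : G -> G -> T) (I : G -> Prop) : T -> Prop :=
  gen_subgroup (fun z => exists a b, I b /\ z = t a b).

Definition IG_GI {G T : mla} (t : G -> G -> T) (I : G -> Prop) : T -> Prop :=
  fun z => exists u v, left_tensor t I u /\ right_tensor t I v /\ z = mul u v.

Definition is_quotient {G Q : mla} (q : G -> Q) (K : G -> Prop) : Prop :=
  mla_hom q /\ (forall y, exists x, q x = y) /\ (forall x, q x = one <-> K x).

(* Main.v *)
Require Import Defs.
From Stdlib Require Import ClassicalEpsilon FunctionalExtensionality.

Section Grp.
Variable G : mla.

Lemma cancel_sq (a : G) : mul a a = a -> a = one.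
Proof.
  intro H. transitivity (mul (inv a) (mul a a)).
  - rewrite mulA, mulVx, mul1x. reflexivity.
  - rewrite H, mulVx. reflexivity.
Qed.

Lemma linv_uniq (a b : G) : mul b a = one -> b = inv a.
Proof.
  intro H. rewrite <- (mulx1 G b), <- (mulxV G a), mulA, H, mul1x. reflexivity.
Qed.

Lemma inv_l_eq (a b : G) : mul (inv a) b = one -> a = b.
Proof.
  intro H. rewrite <- (mulx1 G a), <- H, mulA, mulxV, mul1x. reflexivity.
Qed.

Lemma inv_one : inv (@one G) = one.
Proof. rewrite <- (mul1x G (inv one)), mulxV. reflexivity. Qed.

Lemma conj_one (y : G) : conj one y = y.
Proof. unfold conj. rewrite inv_one, mul1x, mulx1. reflexivity. Qed.
End Grp.

Lemma hom_one {G H : mla} (f : G -> H) : mla_hom f -> f one = one.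
Proof.
  intros [Hm _]. apply cancel_sq. rewrite <- Hm, mul1x. reflexivity.
Qed.

Lemma hom_inv {G H : mla} (f : G -> H) : mla_hom f -> forall x, f (inv x) = inv (f x).
Proof.
  intros Hf x. apply linv_uniq. rewrite <- (proj1 Hf), mulVx. apply hom_one; auto.
Qed.

Lemma hom_conj {G H : mla} (f : G -> H) : mla_hom f -> forall x y, f (conj x y) = conj (f x) (f y).
Proof.
  intros Hf x y. unfold conj. rewrite !(proj1 Hf), (hom_inv f Hf). reflexivity.
Qed.

Lemma hom_comp {A B C : mla} (f : A -> B) (g : B -> C) :
  mla_hom f -> mla_hom g -> mla_hom (fun x => g (f x)).
Proof.
  intros [f1 f2] [g1 g2]; split; intros; rewrite ?f1, ?f2, ?g1, ?g2; reflexivity.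
Qed.

Lemma hom_id {A : mla} : mla_hom (fun x : A => x).
Proof. split; reflexivity. Qed.

Lemma trel_one_l {G L : mla} (f : G -> G -> L) : tensor_rel G L f -> forall y, f one y = one.
Proof.
  intros [_ [H2 _]] y. apply cancel_sq. specialize (H2 one one y).
  rewrite mul1x, !conj_one in H2. symmetry; exact H2.
Qed.

Lemma trel_one_r {G L : mla} (f : G -> G -> L) : tensor_rel G L f -> forall x, f x one = one.
Proof.
  intros [H1 _] x. apply cancel_sq. specialize (H1 x one one).
  rewrite mul1x, !conj_one in H1. symmetry; exact H1.
Qed.

Lemma trel_push {G T L : mla} (t : G -> G -> T) (h : T -> L) :
  mla_hom h -> tensor_rel G T t -> tensor_rel G L (fun x y => h (t x y)).
Proof.
  intros Hh [H1 [H2 [H3 [H4 H5]]]].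
  pose proof (proj1 Hh) as hm. pose proof (proj2 Hh) as hs.
  pose proof (hom_inv h Hh) as hi. pose proof (hom_one h Hh) as ho.
  repeat split; intros; cbv beta.
  - rewrite H1, hm; reflexivity.
  - rewrite H2, hm; reflexivity.
  - pose proof (f_equal h (H3 x x' y)) as E. rewrite !hm, !hi, ho in E. exact E.
  - pose proof (f_equal h (H4 x y y')) as E. rewrite !hm, !hi, ho in E. exact E.
  - rewrite <- hs, H5. reflexivity.
Qed.

Ltac push_p pm pc ps pi :=
  repeat first [rewrite pc | rewrite pi | rewrite ps | rewrite pm].
Ltac push_p_in pm pc ps pi E :=
  repeat first [rewrite pc in E | rewrite pi in E | rewrite ps in E | rewrite pm in E].

Lemma trel_pull {G H L : mla} (p : G -> H) (f : H -> H -> L) :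
  mla_hom p -> tensor_rel H L f -> tensor_rel G L (fun x y => f (p x) (p y)).
Proof.
  intros Hp [H1 [H2 [H3 [H4 H5]]]].
  pose proof (proj1 Hp) as pm. pose proof (proj2 Hp) as ps.
  pose proof (hom_inv p Hp) as pi. pose proof (hom_conj p Hp) as pc.
  repeat split; intros; cbv beta; push_p pm pc ps pi; auto.
Qed.

Lemma trel_down {G H L : mla} (p : G -> H) (f : H -> H -> L) :
  mla_hom p -> (forall y, exists x, p x = y) ->
  tensor_rel G L (fun x y => f (p x) (p y)) -> tensor_rel H L f.
Proof.
  intros Hp Hs [H1 [H2 [H3 [H4 H5]]]].
  pose proof (proj1 Hp) as pm. pose proof (proj2 Hp) as ps.
  pose proof (hom_inv p Hp) as pi. pose proof (hom_conj p Hp) as pc.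
  cbv beta in *.
  repeat split; intros.
  - destruct (Hs x) as [a <-]; destruct (Hs y) as [b <-]; destruct (Hs y') as [c <-].
    pose proof (H1 a b c) as E; push_p_in pm pc ps pi E; exact E.
  - destruct (Hs x) as [a <-]; destruct (Hs x') as [b <-]; destruct (Hs y) as [c <-].
    pose proof (H2 a b c) as E; push_p_in pm pc ps pi E; exact E.
  - destruct (Hs x) as [a <-]; destruct (Hs x') as [b <-]; destruct (Hs y) as [c <-].
    pose proof (H3 a b c) as E; push_p_in pm pc ps pi E; exact E.
  - destruct (Hs x) as [a <-]; destruct (Hs y) as [b <-]; destruct (Hs y') as [c <-].
    pose proof (H4 a b c) as E; push_p_in pm pc ps pi E; exact E.
  - destruct (Hs x) as [a <-]; destruct (Hs y) as [b <-];
    destruct (Hs x') as [c <-]; destruct (Hs y') as [d <-].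
    pose proof (H5 a b c d) as E; push_p_in pm pc ps pi E; exact E.
Qed.

Lemma section_of {A B : Type} (p : A -> B) :
  (forall y, exists x, p x = y) -> exists r : B -> A, forall y, p (r y) = y.
Proof.
  intro Hs. exists (fun y => proj1_sig (constructive_indefinite_description _ (Hs y))).
  intro y. exact (proj2_sig (constructive_indefinite_description _ (Hs y))).
Qed.

Theorem lemma3p2
  (G : mla) (I : G -> Prop) (HI : is_ideal G I)
  (* GI = G / I *)
  (GI : mla) (pi : G -> GI) (Hpi : is_quotient pi I)
  (* T = G (x) G *)
  (T : mla) (t : G -> G -> T) (Ht : is_tensor_square G T t)
  (* TI = (G/I) (x) (G/I) *)
  (TI : mla) (tI : GI -> GI -> TI) (HtI : is_tensor_square GI TI tI)
  (* R = (G (x) G) / ((I (x) G)(G (x) I)) *)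
  (R : mla) (rho : T -> R) (Hrho : is_quotient rho (IG_GI t I)) :
  exists f : TI -> R, mla_iso f.
Proof.
  destruct Hpi as [pih [pis pik]]. destruct Hrho as [rhoh [rhos rhok]].
  destruct HI as [I1 [Im [Iinv [Iconj Istar]]]].
  destruct Ht as [Htr Hu]. destruct HtI as [HtIr HuI].
  destruct (section_of pi pis) as [rep Hrep].
  destruct (section_of rho rhos) as [rep2 Hrep2].
  assert (Kl : forall a b, I a -> rho (t a b) = one).
  { intros a b Ha. apply rhok. exists (t a b), one. split; [|split].
    - apply gs_base. eauto.
    - apply gs_one.
    - rewrite mulx1; reflexivity. }
  assert (Kr : forall a b, I b -> rho (t a b) = one).
  { intros a b Hb. apply rhok. exists one, (t a b). split; [|split].
    - apply gs_one.
    - apply gs_base. eauto.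
    - rewrite mul1x; reflexivity. }
  assert (Idiff : forall x x', pi x = pi x' -> I (mul (inv x) x')).
  { intros x x' E. apply pik. rewrite (proj1 pih), (hom_inv pi pih), E, mulVx. reflexivity. }
  assert (WL : forall x x' y, pi x = pi x' -> rho (t x y) = rho (t x' y)).
  { intros x x' y E. pose proof (Idiff x x' E) as Hi.
    replace x' with (mul x (mul (inv x) x')) by (rewrite mulA, mulxV, mul1x; reflexivity).
    rewrite (proj1 (proj2 Htr)), (proj1 rhoh), (Kl (conj x (mul (inv x) x'))), mul1x; auto. }
  assert (WR : forall x y y', pi y = pi y' -> rho (t x y) = rho (t x y')).
  { intros x y y' E. pose proof (Idiff y y' E) as Hi.
    replace y' with (mul y (mul (inv y) y')) by (rewrite mulA, mulxV, mul1x; reflexivity).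
    rewrite (proj1 Htr), (proj1 rhoh), (Kr (conj y x)), mulx1; auto. }
  set (F := fun a b => rho (t (rep a) (rep b))).
  assert (HF : forall x y, F (pi x) (pi y) = rho (t x y)).
  { intros x y. unfold F. rewrite (WL (rep (pi x)) x), (WR x (rep (pi y)) y); auto. }
  assert (FR : tensor_rel GI R F).
  { apply (trel_down pi F pih pis).
    replace (fun x y => F (pi x) (pi y)) with (fun x y => rho (t x y)).
    - apply trel_push; auto.
    - apply functional_extensionality; intro x; apply functional_extensionality; intro y.
      symmetry; apply HF. }
  destruct (proj1 (HuI R F FR)) as [f [fh Hf]].
  destruct (proj1 (Hu TI (fun x y => tI (pi x) (pi y)) (trel_pull pi tI pih HtIr)))
    as [g [gh Hg]].
  assert (Gk : forall z, IG_GI t I z -> g z = one).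
  { assert (GL : forall u, left_tensor t I u -> g u = one).
    { intros u Hu'. induction Hu' as [u [a [b [Ha ->]]]| |u v _ IH1 _ IH2|u _ IH].
      - rewrite Hg. assert (pi a = one) as -> by (apply pik; auto). apply (trel_one_l tI HtIr).
      - apply hom_one; auto.
      - rewrite (proj1 gh), IH1, IH2, mul1x; reflexivity.
      - rewrite (hom_inv g gh), IH, inv_one; reflexivity. }
    assert (GR : forall u, right_tensor t I u -> g u = one).
    { intros u Hu'. induction Hu' as [u [a [b [Hb ->]]]| |u v _ IH1 _ IH2|u _ IH].
      - rewrite Hg. assert (pi b = one) as -> by (apply pik; auto). apply (trel_one_r tI HtIr).
      - apply hom_one; auto.
      - rewrite (proj1 gh), IH1, IH2, mul1x; reflexivity.
      - rewrite (hom_inv g gh), IH, inv_one; reflexivity. }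
    intros z [u [v [H1 [H2 ->]]]]. rewrite (proj1 gh), GL, GR, mul1x; auto. }
  set (g' := fun r => g (rep2 r)).
  assert (Hg' : forall z, g' (rho z) = g z).
  { intro z. unfold g'. apply inv_l_eq. rewrite <- (hom_inv g gh), <- (proj1 gh).
    apply Gk, rhok. rewrite (proj1 rhoh), (hom_inv rho rhoh), Hrep2, mulVx. reflexivity. }
  assert (g'h : mla_hom g').
  { split; intros x y; destruct (rhos x) as [a <-]; destruct (rhos y) as [b <-].
    - rewrite <- (proj1 rhoh), !Hg', (proj1 gh); reflexivity.
    - rewrite <- (proj2 rhoh), !Hg', (proj2 gh); reflexivity. }
  assert (FG : forall z, f (g z) = rho z).
  { apply (proj2 (Hu R (fun x y => rho (t x y)) (trel_push t rho rhoh Htr)))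
      with (h1 := fun z => f (g z)) (h2 := rho).
    - apply hom_comp; auto.
    - auto.
    - intros x y. rewrite Hg, Hf, HF. reflexivity.
    - reflexivity. }
  assert (GF : forall z, g' (f z) = z).
  { apply (proj2 (HuI TI tI HtIr)) with (h1 := fun z => g' (f z)) (h2 := fun z => z).
    - apply hom_comp; auto.
    - apply hom_id.
    - intros a b. rewrite Hf. unfold F. rewrite Hg', Hg, !Hrep. reflexivity.
    - reflexivity. }
  exists f. split; [exact fh | split].
  - intros x y E. rewrite <- (GF x), <- (GF y), E. reflexivity.
  - intro r. destruct (rhos r) as [z <-]. exists (g z). apply FG.
Qed.
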